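(* Let $R\ge 0$ and let $\lambda$ be a positive, increasing, smooth function on $[R,\infty)$. Let $g$ be a positive differentiable function on $[R,\infty)$ (with $R>0$ or $g$ defined on $(0,\infty)$) such that $X\mapsto\log g(e^X)$ is convex. Suppose there is $x_1$ with $g(x_1)=\lambda(x_1)$ and there is $x_2$ with $R\le x_2<x_1$ and $g(x_2)<\lambda(x_2)$. Then there is $x_0$ with $x_2<x_0\le x_1$, $g(x_0)=\lambda(x_0)$, and \[ \int_{x_0}^\infty g(x)\,\lambda(x)^{-1}\,dx\ge S(x_0,\lambda). \]
   Context: For a positive increasing smooth function $\lambda$ on $[R,\infty)$ and $x_0\ge R$, \[ S(x_0,\lambda)=\int_{x_0}^\infty\frac{\lambda(x_0)}{\lambda(x)}\left(\frac{x}{x_0}\right)^{x_0\lambda'(x_0)/\lambda(x_0)}dx . \] *)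

(* Defs.v *)
From HB Require Import structures.
From mathcomp Require Import all_boot all_order all_algebra.
From mathcomp Require Import all_classical all_reals all_analysis.
Set Implicit Arguments. Unset Strict Implicit. Unset Printing Implicit Defensive.
Import Order.TTheory GRing.Theory Num.Theory.
Import numFieldNormedType.Exports.
Local Open Scope classical_set_scope.
Local Open Scope ring_scope.

Definition smooth_on (R : realType) (f : R -> R) (A : set R) : Prop :=
  forall (n : nat) (x : R), A x -> derivable (derive1n n f) x 1.

(* S(x0, lam) = \int_{x0}^oo lam(x0)/lam(x) (x/x0)^(x0 lam'(x0)/lam(x0)) dx,
   as an extended real (nonnegative integrand, possibly +oo). *)
Definition S_fun (R : realType) (lam : R -> R) (x0 : R) : \bar R :=
  (\int[@lebesgue_measure R]_(x in `[x0, +oo[)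
     ((lam x0 / lam x) * (x / x0) `^ (x0 * derive1 lam x0 / lam x0))%:E)%E.

(* Main.v *)
Require Import Defs.
From HB Require Import structures.
From mathcomp Require Import all_boot all_order all_algebra.
From mathcomp Require Import all_classical all_reals all_analysis.
Import Order.TTheory GRing.Theory Num.Theory.
Import numFieldNormedType.Exports.
Local Open Scope classical_set_scope.
Local Open Scope ring_scope.
From mathcomp Require Import ring lra.
Lemma right_nbhs_ex (R : realType) (x : R) (P : R -> Prop) :
  (\forall t \near x^'+, P t) -> exists2 d, 0 < d & forall t, x < t < x + d -> P t.
Proof.
rewrite /= near_withinE => /nbhs_ballP[d d0 Hd]; exists d => // t /andP[xt td].
apply: Hd => //=; rewrite /ball /= ltr0_norm ?subr_lt0 // opprB ltrBlDl //.
Qed.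
Lemma left_nbhs_ex (R : realType) (x : R) (P : R -> Prop) :
  (\forall t \near x^'-, P t) -> exists2 d, 0 < d & forall t, x - d < t < x -> P t.
Proof.
rewrite /= near_withinE => /nbhs_ballP[d d0 Hd]; exists d => // t /andP[xt td].
apply: Hd => //=; rewrite /ball /= gtr0_norm ?subr_gt0 // ltrBlDl -ltrBlDr //.
Qed.
Lemma first_cross (R : realType) (phi : R -> R) (a b : R) : a < b ->
  {within `[a, b], continuous phi} -> 0 < phi a -> phi b = 0 ->
  exists c, [/\ a < c, c <= b, phi c = 0 & forall y, a <= y < c -> 0 < phi y].
Proof.
move=> ab cphi pa pb.
have [cin cra clb] := (continuous_within_itvP _ ab).1 cphi.
pose S := [set x | a <= x <= b /\ phi x <= 0].
have Sb : S b by split; [rewrite (ltW ab) lexx | rewrite pb].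
have lbS : lbound S a by move=> y [/andP[]].
have hS : has_inf S by split; [exists b | exists a].
set c := inf S.
have ac : a <= c by apply: lb_le_inf => //; exists b.
have cb : c <= b by apply: ge_inf => //; exists a.
have below y : a <= y < c -> 0 < phi y.
  move=> /andP[ay yc]; rewrite ltNge; apply/negP => py.
  have Sy : S y by split => //; rewrite ay /= (le_trans (ltW yc) cb).
  by move: yc; rewrite ltNge ge_inf //; exists a.
have Sc : phi c <= 0.
  rewrite leNgt; apply/negP => pc.
  have [cb'|cnb] := eqVneq c b; first by move: pc; rewrite cb' pb ltxx.
  have [d d0 Hd] : exists2 d, 0 < d & forall t, c <= t < c + d -> 0 < phi t.
    have [ca'|cna] := eqVneq c a.
      rewrite ca' in pc *.
      have [d d0 Hd] := @right_nbhs_ex _ _ _ (cvgr_gt _ cra _ pc).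
      exists d => // t /andP[]; rewrite le_eqVlt => /predU1P[<- //|hat td].
      by apply: Hd; rewrite hat td.
    have cin' : c \in `]a, b[ by rewrite in_itv /= !lt_neqAle eq_sym cna ac cnb cb.
    have := cvgr_gt _ (cin c cin') _ pc; move=> /(_ _) /nbhs_ballP[d d0 Hd].
    exists d => // t /andP[ct td]; apply: Hd; rewrite /ball /= ler0_norm ?subr_le0 //.
    by rewrite opprB ltrBlDl.
  have [e Se ecd] := inf_adherent d0 hS.
  have ce : c <= e by apply: ge_inf => //; exists a.
  by move: Se => [_]; rewrite leNgt Hd // ce ecd.
have ca : a < c.
  rewrite lt_neqAle ac andbT; apply/eqP => ac'.
  by move: Sc; rewrite -ac' leNgt pa.
exists c; split => //.
apply/eqP; rewrite eq_le Sc /= leNgt; apply/negP => pc.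
have [cb'|cnb] := eqVneq c b; first by move: pc; rewrite cb' pb ltxx.
have cin' : c \in `]a, b[ by rewrite in_itv /= ca lt_neqAle cnb cb.
have := cvgr_lt _ (cvg_at_left_filter (cin c cin')) _ pc; move=> /(_ _) H1.
have [t [[t1 t2] t3]] := filter_ex (filterI (filterI H1 (nbhs_left_gt ca)) (nbhs_left_lt c)).
by move: t1; rewrite ltNge ltW // below // (ltW t2) t3.
Qed.
Lemma key (R : realType) (G L : R -> R) (X2 X0 a : R) :
  X2 < X0 -> G X0 = L X0 -> (forall X, X2 < X < X0 -> G X < L X) ->
  (fun h : R => h^-1 *: (L (h *: 1 + X0) - L X0)) @ 0^' --> a ->
  (forall X Y t, X2 < X -> X2 < Y -> 0 <= t <= 1 ->
     G (t * X + (1 - t) * Y) <= t * G X + (1 - t) * G Y) ->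
  forall Y, X0 < Y -> G X0 + a * (Y - X0) <= G Y.
Proof.
move=> X20 GL0 GL HL conv Y X0Y.
set u := Y - X0.
have u0 : 0 < u by rewrite /u subr_gt0.
set s := (G Y - G X0) / u.
have su : s * u = G Y - G X0 by rewrite /s mulfVK // gt_eqF.
rewrite leNgt; apply/negP => hlt.
have sa : s < a.
  rewrite -(ltr_pM2r u0) su; lra.
have eps0 : 0 < a - s by rewrite subr_gt0.
have H1 : \forall h \near 0^', `|a - h^-1 *: (L (h *: 1 + X0) - L X0)| < a - s.
  by move: HL => /cvgrPdist_lt /(_ _ eps0).
have H1' : \forall h \near 0^'-, `|a - h^-1 *: (L (h *: 1 + X0) - L X0)| < a - s.
  move: H1 => /(@within_subset _ (fun h : R => h < 0) (fun h : R => h != 0) (nbhs 0) _).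
  by apply => // h /= /lt_eqF ->.
have H2 : \forall h \near 0^'-, X2 - X0 < h.
  by apply: nbhs_left_gt; rewrite subr_lt0.
have [h [[Hq Hr] hneg]] := filter_ex (filterI (filterI H1' H2) (nbhs_left_lt 0)).
set d := - h.
have d0 : 0 < d by rewrite /d oppr_gt0.
set X := h + X0.
have XX0 : X = X0 - d by rewrite /X /d; lra.
have [q qd] : exists q, q = h^-1 *: (L (h *: 1 + X0) - L X0) by eexists.
rewrite -qd in Hq.
have qdE : q * d = L X0 - L X.
  rewrite qd /d /X /= -[h%:A]/(h * 1) mulr1 -[_ *: _]/(_ * _); field; exact: ltr0_neq0.
have GXL : G X < L X by apply: GL; rewrite /X; apply/andP; split; lra.
pose t := u / (u + d).
have ud0 : 0 < u + d by lra.
have t01 : 0 <= t <= 1.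
  apply/andP; split; first by rewrite /t divr_ge0 // ltW.
  by rewrite /t ler_pdivrMr // mul1r; lra.
have X2X : X2 < X by rewrite /X; lra.
have X2Y : X2 < Y by lra.
have := conv X Y t X2X X2Y t01.
have -> : t * X + (1 - t) * Y = X0.
  rewrite /t XX0 /u; field; rewrite -/u; exact: lt0r_neq0.
have -> : t * G X + (1 - t) * G Y = (u * G X + d * G Y) / (u + d).
  rewrite /t; field; exact: lt0r_neq0.
rewrite ler_pdivlMr // => hc.
have qs : s < q.
  move: Hq; rewrite ltr_norml => /andP[_]; lra.
have udp : 0 < u * d by apply: mulr_gt0.
nra.
Qed.
Local Open Scope ereal_scope.
Lemma mono_int (R : realType) (D : set R) (f1 f2 : R -> \bar R) :
  (forall x, D x -> 0 <= f1 x) -> (forall x, D x -> f1 x <= f2 x) ->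
  \int[@lebesgue_measure R]_(x in D) f1 x <= \int[@lebesgue_measure R]_(x in D) f2 x.
Proof.
move=> f10 f12.
have f20 x : D x -> 0 <= f2 x by move=> Dx; exact: le_trans (f10 _ Dx) (f12 _ Dx).
rewrite (ge0_integralE (@lebesgue_measure R) f10) (ge0_integralE (@lebesgue_measure R) f20) /=.
apply: ereal_sup_le => _ [h /= hf <-]; exists h => //= x.
apply: le_trans (hf x) _; rewrite /patch; case: ifP => // /set_mem Dx; exact: f12.
Qed.
Local Close Scope ereal_scope.

Theorem lemma4p1 (R : realType) (R0 : R) (lam g : R -> R) (x1 x2 : R) :
  0 <= R0 ->
  (forall x, R0 <= x -> 0 < lam x) ->
  (forall x y, R0 <= x -> x <= y -> lam x <= lam y) ->
  {within `[R0, +oo[, continuous lam} ->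
  smooth_on lam `]R0, +oo[ ->
  (forall x, 0 < x -> R0 <= x -> 0 < g x) ->
  {within [set x | 0 < x /\ R0 <= x], continuous g} ->
  (forall x, 0 < x -> R0 < x -> derivable g x 1) ->
  (forall (X Y t : R), R0 <= expR X -> R0 <= expR Y -> 0 <= t <= 1 ->
     ln (g (expR (t * X + (1 - t) * Y)))
       <= t * ln (g (expR X)) + (1 - t) * ln (g (expR Y))) ->
  g x1 = lam x1 ->
  0 < x2 -> R0 <= x2 -> x2 < x1 -> g x2 < lam x2 ->
  exists x0 : R, [/\ x2 < x0, x0 <= x1, g x0 = lam x0 &
    (S_fun lam x0 <= \int[@lebesgue_measure R]_(x in `[x0, +oo[)
                        (g x / lam x)%:E)%E].
Proof.
move=> R00 lam0 lamincr clam slam g0 cg dg conv gx1 x20 Rx2 x21 gx2.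
pose phi x := lam x - g x.
have cphi : {within `[x2, x1], continuous phi}.
  have sub1 : `[x2, x1] `<=` `[R0, +oo[.
    by move=> x; rewrite /= !in_itv /= => /andP[h1 h2]; rewrite (le_trans Rx2 h1).
  have sub2 : `[x2, x1] `<=` [set x | 0 < x /\ R0 <= x].
    move=> x; rewrite /= !in_itv /= => /andP[h1 h2].
    by rewrite (lt_le_trans x20 h1) (le_trans Rx2 h1).
  have cl := continuous_subspaceW sub1 clam.
  have cg' := continuous_subspaceW sub2 cg.
  move=> x; apply: cvgB; [exact: cl | exact: cg'].
have p2 : 0 < phi x2 by rewrite /phi subr_gt0.
have p1 : phi x1 = 0 by rewrite /phi gx1 subrr.
have [x0 [x20' x01 phi0 below]] := @first_cross _ phi x2 x1 x21 cphi p2 p1.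
have x0pos : 0 < x0 := lt_trans x20 x20'.
have R0x0 : R0 < x0 := le_lt_trans Rx2 x20'.
have gx0 : g x0 = lam x0 by apply/eqP; rewrite eq_sym -subr_eq0; exact/eqP.
exists x0; split => //.
pose a := x0 * derive1 lam x0 / lam x0.
pose G X := ln (g (expR X)).
pose L X := ln (lam (expR X)).
pose X0 := ln x0.
pose X2 := ln x2.
have eX0 : expR X0 = x0 by rewrite /X0 lnK // posrE.
have eX2 : expR X2 = x2 by rewrite /X2 lnK // posrE.
have ex2 X : X2 < X -> x2 < expR X by rewrite -ltr_expR eX2.
have X20 : X2 < X0 by rewrite -ltr_expR eX0 eX2.
have GL0 : G X0 = L X0 by rewrite /G /L eX0 gx0.
have GL X : X2 < X < X0 -> G X < L X.
  move=> /andP[h1 h2].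
  have h1' := ex2 _ h1.
  have h2' : expR X < x0 by rewrite -eX0 ltr_expR.
  have xpos : 0 < expR X := expR_gt0 X.
  have Rx : R0 <= expR X := le_trans Rx2 (ltW h1').
  have := below (expR X); rewrite (ltW h1') h2' /phi subr_gt0 => /(_ isT) hl.
  rewrite /G /L ltr_ln // posrE; [exact: g0 | exact: lam0].
have lx0 : 0 < lam x0 := lam0 _ (ltW R0x0).
have dlam : derivable lam x0 1.
  by have := slam 0%N x0; rewrite /= in_itv /= andbT; apply.
have [dex dexv] := is_derive_expR X0.
have [dln dlnv] := is_derive1_ln lx0.
have dle : derivable (lam \o expR) X0 1.
  apply/derivable1_diffP; apply: differentiable_comp; apply/derivable1_diffP => //.
  by rewrite eX0.
have dL : derivable L X0 1.
  rewrite (_ : L = (@ln R) \o (lam \o expR)) //.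
  apply/derivable1_diffP; apply: differentiable_comp.
    exact/derivable1_diffP.
  by apply/derivable1_diffP; rewrite /= eX0.
have DL : 'D_1 L X0 = a.
  rewrite -derive1E.
  have dln' : derivable (@ln R) ((lam \o expR) X0) 1 by rewrite /= eX0.
  have dlam' : derivable lam (expR X0) 1 by rewrite eX0.
  have E1 := derive1_comp dle dln'.
  have E2 := derive1_comp dex dlam'.
  rewrite (_ : L = (@ln R) \o (lam \o expR)) // E1 E2 /= !derive1E eX0 dlnv dexv eX0 /a.
  by rewrite derive1E mulrC (mulrC _ x0).
have HL : (fun h : R => h^-1 *: (L (h *: 1 + X0) - L X0)) @ 0^' --> a.
  by rewrite -DL; exact: dL.
have convG X Y t : X2 < X -> X2 < Y -> 0 <= t <= 1 ->
     G (t * X + (1 - t) * Y) <= t * G X + (1 - t) * G Y.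
  move=> hX hY ht; apply: conv => //.
  - exact: le_trans Rx2 (ltW (ex2 _ hX)).
  - exact: le_trans Rx2 (ltW (ex2 _ hY)).
have kk := @key _ G L X2 X0 a X20 GL0 GL HL convG.
have bound x : x0 <= x -> lam x0 * (x / x0) `^ a <= g x.
  rewrite le_eqVlt => /predU1P[<-|hx].
    by rewrite divff ?gt_eqF // powR1 mulr1 gx0.
  have xpos : 0 < x := lt_trans x0pos hx.
  have gpos : 0 < g x by apply: g0 => //; apply: le_trans (ltW R0x0) (ltW hx).
  have := kk (ln x); rewrite /G lnK ?posrE // => /(_ _) h.
  have -> : lam x0 * (x / x0) `^ a = expR (ln (g (expR X0)) + a * (ln x - X0)).
    rewrite expRD eX0 gx0 lnK ?posrE // /powR gt_eqF ?divr_gt0 //.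
    by rewrite ln_div ?posrE.
  rewrite -[g x]lnK ?posrE // ler_expR; apply: h.
  by rewrite /X0 ltr_ln ?posrE.
rewrite /S_fun; apply: mono_int.
- move=> x; rewrite /= in_itv /= andbT => hx; rewrite lee_fin.
  apply: mulr_ge0; last exact: powR_ge0.
  by apply: divr_ge0; [exact: ltW | apply: ltW; apply: lam0; exact: le_trans (ltW R0x0) hx].
- move=> x; rewrite /= in_itv /= andbT => hx; rewrite lee_fin.
  have lxp : 0 < lam x by apply: lam0; exact: le_trans (ltW R0x0) hx.
  rewrite mulrAC; apply: ler_wpM2r; first by rewrite invr_ge0 ltW.
  exact: bound.
Qed.
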